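(* Every signed digraph $G$ on $[n]$ admits a nilpotent function $f:\{0,1,2,3\}^n\to\{0,1,2,3\}^n$ of class at most $2$.
   Context: A signed digraph is a digraph (loops allowed, no multiple arcs) in which each arc is labeled positive, negative, or null (unsigned). For a finite interval of integers $A$, a function over $A$ is a map $f:A^n\to A^n$; $f^0=\mathrm{id}$, $f^k=f\circ f^{k-1}$. The interaction graph $G(f)$ is the signed digraph on $[n]$ with an arc $(j,i)$ iff $f_i(a)\neq f_i(b)$ for some $a,b\in A^n$ with $a_j<b_j$ and $a_\ell=b_\ell$ for $\ell\neq j$; the arc is positive if $f_i(a)\leq f_i(b)$ for all such pairs, negative if $f_i(a)\geq f_i(b)$ for all such pairs, and null otherwise. $G$ admits $f$ if $G(f)=G$. $f$ is nilpotent if $f^k$ is constant for some $k\geq 0$; the least such $k$ is its class. *)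

(* Defs.v *)
From mathcomp Require Import all_boot.
Set Implicit Arguments. Unset Strict Implicit. Unset Printing Implicit Defensive.

Inductive sign := Pos | Neg | Null.

(* A signed digraph on [n] = 'I_n (loops allowed, no multiple arcs):
   G j i = None      : no arc (j,i);
   G j i = Some s    : arc (j,i) with label s. *)
Definition signed_digraph (n : nat) := 'I_n -> 'I_n -> option sign.

Definition config (m n : nat) := {ffun 'I_n -> 'I_m}.

Definition jstep (m n : nat) (j : 'I_n) (a b : config m n) : bool :=
  (a j < b j) && [forall l : 'I_n, (l != j) ==> (a l == b l)].

Definition interaction_graph (m n : nat) (f : config m n -> config m n)
  : signed_digraph n :=
  fun j i =>
    if [exists a : config m n, exists b : config m n,
          jstep j a b && (f a i != f b i)] then
      if [forall a : config m n, forall b : config m n,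
            jstep j a b ==> (f a i <= f b i)] then Some Pos
      else if [forall a : config m n, forall b : config m n,
            jstep j a b ==> (f b i <= f a i)] then Some Neg
      else Some Null
    else None.

Definition admits (m n : nat) (G : signed_digraph n) (f : config m n -> config m n) :=
  forall j i, interaction_graph f j i = G j i.

Definition nilpotent_class_le (m n : nat) (f : config m n -> config m n) (k : nat) :=
  exists k', k' <= k /\ exists c : config m n, forall x, iter k' f x = c.

(* Main.v *)
Require Import Defs.
From mathcomp Require Import all_boot zify.
Set Implicit Arguments. Unset Strict Implicit. Unset Printing Implicit Defensive.

Definition hh (o : option sign) (v : 'I_4) : bool :=
  match o with
  | None => false
  | Some Pos => nat_of_ord v == 3
  | Some Neg => nat_of_ord v != 3
  | Some Null => nat_of_ord v == 2
  end.

Definition zz (o : option sign) : 'I_4 :=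
  match o with Some Neg => @Ordinal 4 3 isT | _ => @Ordinal 4 0 isT end.

Definition bo (b : bool) : 'I_4 := if b then @Ordinal 4 1 isT else @Ordinal 4 0 isT.

Definition EE n (G : signed_digraph n) (x : config 4 n) i :=
  [exists k, hh (G k i) (x k)].

Definition FF n (G : signed_digraph n) (x : config 4 n) : config 4 n :=
  [ffun i => bo (EE G x i)].

Definition mk n (G : signed_digraph n) (i j : 'I_n) (p : 'I_4) : config 4 n :=
  [ffun k => if k == j then p else zz (G k i)].

Lemma hz o : hh o (zz o) = false.
Proof. by case: o => [[]|]. Qed.

Lemma E_mk n (G : signed_digraph n) i j p : EE G (mk G i j p) i = hh (G j i) p.
Proof.
apply/existsP/idP.
  case=> k; rewrite ffunE; case: eqP => [->//|_]; by rewrite hz.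
by move=> H; exists j; rewrite ffunE eqxx.
Qed.

Lemma jstep_mk n (G : signed_digraph n) i j p q :
  jstep j (mk G i j p) (mk G i j q) = (p < q).
Proof.
rewrite /jstep !ffunE eqxx.
have -> : [forall l, (l != j) ==> (mk G i j p l == mk G i j q l)].
  by apply/forallP => l; apply/implyP => Hl; rewrite !ffunE (negbTE Hl).
by rewrite andbT.
Qed.

Lemma E_trans n (G : signed_digraph n) i j (a b : config 4 n) :
  (forall l, l != j -> a l = b l) ->
  (hh (G j i) (a j) -> hh (G j i) (b j)) -> EE G a i -> EE G b i.
Proof.
move=> Ho Hj /existsP [k Hk]; apply/existsP.
case: (eqVneq k j) => [Ek|Nk].
  by subst k; exists j; apply: Hj.
by exists k; rewrite -Ho.
Qed.

Lemma jstepE n j (a b : config 4 n) :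
  jstep j a b -> a j < b j /\ forall l, l != j -> a l = b l.
Proof.
case/andP => H1 /forallP H2; split => // l Hl.
by have /implyP /(_ Hl) /eqP := H2 l.
Qed.

Lemma leq_bo (b1 b2 : bool) : (b1 -> b2) -> bo b1 <= bo b2.
Proof. by case: b1; case: b2 => // H; have := H isT. Qed.

Definition o0 : 'I_4 := @Ordinal 4 0 isT.
Definition o2 : 'I_4 := @Ordinal 4 2 isT.
Definition o3 : 'I_4 := @Ordinal 4 3 isT.

Theorem proposition4 (n : nat) (G : signed_digraph n) :
  exists f : config 4 n -> config 4 n, admits G f /\ nilpotent_class_le f 2.
Proof.
exists (FF G); split.
  move=> j i; rewrite /interaction_graph.
  have Hex : forall p q : 'I_4, p < q -> hh (G j i) p != hh (G j i) q ->
      [exists a : config 4 n, exists b : config 4 n,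
          jstep j a b && (FF G a i != FF G b i)].
    move=> p q Hpq Hne; apply/existsP; exists (mk G i j p); apply/existsP;
      exists (mk G i j q); rewrite jstep_mk Hpq /= /FF !ffunE !E_mk.
    by move: Hne; case: (hh _ p); case: (hh _ q).
  have Hfa : forall p q : 'I_4, p < q -> (hh (G j i) p && ~~ hh (G j i) q) ->
      [forall a : config 4 n, forall b : config 4 n,
            jstep j a b ==> (FF G a i <= FF G b i)] = false.
    move=> p q Hpq Hne; apply/negbTE/forallPn; exists (mk G i j p);
      apply/forallPn; exists (mk G i j q).
    rewrite negb_imply jstep_mk Hpq /= /FF !ffunE !E_mk.
    by move: Hne; case: (hh _ p); case: (hh _ q).
  have Hfb : forall p q : 'I_4, p < q -> (~~ hh (G j i) p && hh (G j i) q) ->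
      [forall a : config 4 n, forall b : config 4 n,
            jstep j a b ==> (FF G b i <= FF G a i)] = false.
    move=> p q Hpq Hne; apply/negbTE/forallPn; exists (mk G i j p);
      apply/forallPn; exists (mk G i j q).
    rewrite negb_imply jstep_mk Hpq /= /FF !ffunE !E_mk.
    by move: Hne; case: (hh _ p); case: (hh _ q).
  case Hg: (G j i) => [[]|].
  - rewrite (Hex o0 o3) ?Hg //.
    have -> // : [forall a : config 4 n, forall b : config 4 n,
            jstep j a b ==> (FF G a i <= FF G b i)].
    apply/forallP => a; apply/forallP => b; apply/implyP => Hs.
    have [Hlt Ho] := jstepE Hs.
    rewrite /FF !ffunE; apply: leq_bo; apply: (E_trans (j:=j)) => //.
    rewrite Hg /= => /eqP Ha.
    by have := leq_ltn_trans Hlt (ltn_ord (b j)); rewrite Ha.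
  - rewrite (Hex o0 o3) ?Hg // (Hfa o0 o3) ?Hg //.
    have -> // : [forall a : config 4 n, forall b : config 4 n,
            jstep j a b ==> (FF G b i <= FF G a i)].
    apply/forallP => a; apply/forallP => b; apply/implyP => Hs.
    have [Hlt Ho] := jstepE Hs.
    rewrite /FF !ffunE; apply: leq_bo; apply: (E_trans (j:=j)).
      by move=> l Hl; rewrite Ho.
    rewrite Hg /= => Hb; apply/eqP => Ha.
    by have := leq_ltn_trans Hlt (ltn_ord (b j)); rewrite Ha.
  - rewrite (Hex o0 o2) ?Hg // (Hfa o2 o3) ?Hg // (Hfb o0 o2) ?Hg //.
  - have -> // : [exists a : config 4 n, exists b : config 4 n,
          jstep j a b && (FF G a i != FF G b i)] = false.
    apply/negbTE/existsPn => a; apply/existsPn => b; apply/negP => /andP [Hs Hne].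
    have [_ Ho] := jstepE Hs.
    have : EE G a i = EE G b i.
      apply/idP/idP; apply: (E_trans (j:=j)); rewrite ?Hg //.
      by move=> l Hl; rewrite Ho.
    by move: Hne; rewrite /FF !ffunE => /negP Hne E; apply: Hne; rewrite E.
exists 2; split => //; exists [ffun i => bo [exists k, if G k i is Some Neg then true else false]] => x /=.
apply/ffunP => i; rewrite /FF !ffunE; congr bo; apply: eq_existsb => k.
by rewrite ffunE; case: (G k i) => [[]|]; case: (EE G x k).
Qed.
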